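(* Let $G\in\mathcal{C}$ and $N\unlhd G$. For each vertex $v$ of $\mathcal{G}_N$ there is a unique directed path in $\mathcal{G}_N$ from $(G,N,1_N)$ to $v$.
   Context: All groups are finite. $\mathcal{C}$ is the class of finite groups $G$ such that every subgroup and quotient group of $G$ is either abelian or contains a non-central abelian normal subgroup. $\psi^x(g)=\psi(xgx^{-1})$, $\psi^G$ induced character, $1_N$ trivial character. An $N$-linear character triple of $G$ is $(H,A,\vartheta)$ with $H\le G$, $A\unlhd H$, $\vartheta$ a linear character of $A$ invariant in $H$, and $\ker(\vartheta^G)=N$. For $B\unlhd M\le G$ and linear $\lambda$ on $B$, $\widetilde{\operatorname{Lin}}(M|\lambda)$ is the set of linear characters of $M$ whose restriction to $B$ contains $\lambda$ and whose induction to $G$ has kernel $N$. For each triple a normal subgroup $\mathcal{A}=\mathcal{A}_{(H,A,\vartheta)}$ of $H$ is fixed, of maximal order among normal subgroups of $H$ containing $\ker\vartheta$ with abelian quotient by $\ker\vartheta$. $\operatorname{Aut}(\mathbb{C}|\vartheta)\times H$ (field automorphisms of $\mathbb{C}$ fixing $\mathbb{Q}(\vartheta)$, times $H$) acts on $\widetilde{\operatorname{Lin}}(\mathcal{A}|\vartheta)$ by $(\sigma,h)\cdot\varphi=\sigma\circ\varphi^h$; fix orbit representatives $\mathfrak{Lin}(\mathcal{A}|\vartheta)$. If $H\neq A$, $Cl(H,A,\vartheta)=\{(I_H(\varphi),\mathcal{A},\varphi):\varphi\in\mathfrak{Lin}(\mathcal{A}|\vartheta)\}$ with $I_H(\varphi)=\{h\in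 H:\varphi^h=\varphi\}$; if $H=A$, $Cl(H,A,\vartheta)=\emptyset$. $\mathcal{G}_N$ is the directed graph whose vertices are the $N$-linear character triples $v$ reachable by a directed path from $(G,N,1_N)$ in the graph with an edge $(u,v)$ iff $v\in Cl(u)$, and whose edges are the edges of that graph between its vertices. *)

(* Defs.v *)
From HB Require Import structures.
From mathcomp Require Import all_boot all_order all_algebra all_fingroup all_solvable all_field all_character.
Set Implicit Arguments.
Unset Strict Implicit.
Unset Printing Implicit Defensive.
Import GRing.Theory Num.Theory.
Local Open Scope group_scope.

Definition abelian_or_ncan (hT : finGroupType) (X : {set hT}) : Prop :=
  abelian X \/
  exists A : {group hT}, [/\ A <| X, abelian A & ~~ (A \subset 'Z(X))].

Definition in_classC (gT : finGroupType) (G : {group gT}) : Prop :=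
  (forall H : {group gT}, H \subset G -> abelian_or_ncan H) /\
  (forall K : {group gT}, K <| G -> abelian_or_ncan (G / K)).

Definition triple (gT : finGroupType) :=
  {HA : {group gT} * {group gT} & 'CF(HA.2)}.

Definition mk_triple (gT : finGroupType) (H A : {group gT}) (th : 'CF(A))
  : triple gT := @Tagged _ (H, A) (fun HA => 'CF(HA.2)) th.

Definition tH (gT : finGroupType) (t : triple gT) : {group gT} := (tag t).1.
Definition tA (gT : finGroupType) (t : triple gT) : {group gT} := (tag t).2.
Definition tth (gT : finGroupType) (t : triple gT) : 'CF(tA t) := tagged t.

Definition lin_triple (gT : finGroupType) (G N : {group gT}) (t : triple gT)
  : Prop :=
  [/\ tH t \subset G, tA t <| tH t, tth t \is a linear_char,
      {in tH t, forall h, (tth t ^ h)%CF = tth t}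
    & cfker ('Ind[G] (tth t))%R = N].

Definition calA_spec (gT : finGroupType) (t : triple gT) (X : {group gT})
  : Prop :=
  [/\ X <| tH t, cfker (tth t) \subset X, abelian (X / cfker (tth t))
    & forall K : {group gT}, K <| tH t -> cfker (tth t) \subset K ->
        abelian (K / cfker (tth t)) -> #|K| <= #|X| ]%N.

Definition tLin (gT : finGroupType) (G N B M : {group gT}) (lam : 'CF(B))
  (phi : 'CF(M)) : Prop :=
  [/\ phi \is a linear_char, ('['Res[B] phi, lam] != 0)%R
    & cfker ('Ind[G] phi)%R = N].

(* Field automorphisms of C are represented by
   ring automorphisms of algC (the field of values of characters). *)
Definition lin_orbit_rel (gT : finGroupType) (H B M : {group gT})
  (th : 'CF(B)) (phi psi : 'CF(M)) : Prop :=
  exists (s : {rmorphism algC -> algC}) (h : gT),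
    [/\ forall x, s (th x) = th x, h \in H & psi = cfAut s (phi ^ h)%CF].

Definition reps_spec (gT : finGroupType) (G N : {group gT}) (t : triple gT)
  (X : {group gT}) (R : 'CF(X) -> Prop) : Prop :=
  [/\ forall phi, R phi -> tLin G N (tth t) phi,
      forall phi psi, R phi -> R psi ->
        lin_orbit_rel (tH t) (tth t) phi psi -> phi = psi
    & forall psi, tLin G N (tth t) psi ->
        exists2 phi, R phi & lin_orbit_rel (tH t) (tth t) phi psi].

Definition cl_edge (gT : finGroupType) (G N : {group gT})
  (cA : triple gT -> {group gT}) (reps : forall t, 'CF(cA t) -> Prop)
  (u v : triple gT) : Prop :=
  [/\ lin_triple G N u, lin_triple G N v, tH u != tA u
    & exists2 phi : 'CF(cA u), reps u phi &
        v = mk_triple ('I_(tH u)[phi])%G phi].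

Definition root_triple (gT : finGroupType) (G N : {group gT}) : triple gT :=
  mk_triple G (1%R : 'CF(N)).

Arguments cl_edge {gT} G N cA reps u v.

Inductive reachable (T : Type) (e : T -> T -> Prop) (r : T) : T -> Prop :=
  | reach_refl : reachable e r r
  | reach_step u v : reachable e r u -> e u v -> reachable e r v.

Definition GN_vertex (gT : finGroupType) (G N : {group gT})
  (cA : triple gT -> {group gT}) (reps : forall t, 'CF(cA t) -> Prop)
  (v : triple gT) : Prop :=
  reachable (cl_edge G N cA reps) (root_triple G N) v.

Arguments GN_vertex {gT} G N cA reps v.

Definition GN_edge (gT : finGroupType) (G N : {group gT})
  (cA : triple gT -> {group gT}) (reps : forall t, 'CF(cA t) -> Prop)
  (u v : triple gT) : Prop :=
  [/\ GN_vertex G N cA reps u, GN_vertex G N cA reps v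
    & cl_edge G N cA reps u v].

Arguments GN_edge {gT} G N cA reps u v.

Fixpoint epath (T : Type) (e : T -> T -> Prop) (x : T) (p : seq T) : Prop :=
  if p is y :: p' then e x y /\ epath e y p' else True.

Definition dpath (T : eqType) (e : T -> T -> Prop) (r v : T) (p : seq T)
  : Prop :=
  [/\ epath e r p, last r p = v & uniq (r :: p)].

(* Main.v *)
Require Import Defs.
From HB Require Import structures.
From mathcomp Require Import all_boot all_order all_algebra all_fingroup all_solvable all_field all_character.
Import GRing.Theory Num.Theory.
Local Open Scope group_scope.
Set Implicit Arguments.
Unset Strict Implicit.

Lemma lin_eq_dot (gT : finGroupType) (B : {group gT}) (a b : 'CF(B)) :
  a \is a linear_char -> b \is a linear_char -> ('[a, b] != 0)%R -> a = b.
Proof.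
move=> /lin_char_irr/irrP[i ->] /lin_char_irr/irrP[j ->].
by rewrite cfdot_irr pnatr_eq0 eqb0 negbK => /eqP ->.
Qed.

Lemma A_sub_calA (gT : finGroupType) (G N : {group gT}) (t : triple gT)
  (X : {group gT}) : lin_triple G N t -> calA_spec t X -> tA t \subset X.
Proof.
case=> _ nAH lin inv _ [nXH kX abX maxX].
have sAH := normal_sub nAH; have nAH' := normal_norm nAH.
have chr := lin_charW lin.
have key : {in tA t & tH t, forall a h, tth t (a ^ h) = tth t a}.
  move=> a h aA hH.
  have hN : h^-1 \in 'N(tA t) by rewrite (subsetP nAH') ?groupV.
  have := inv _ (groupVr hH).
  by move/(congr1 (fun f : 'CF(_) => f a)); rewrite cfConjgE ?invgK.
have memK : {in tA t, forall a, (a \in cfker (tth t)) = (tth t a == 1%R)}.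
  by move=> a aA; rewrite cfkerEchar // inE aA lin_char1.
have nKH : tH t \subset 'N(cfker (tth t)).
  apply/normsP => h hH; apply/eqP; rewrite eqEcard cardJg leqnn andbT.
  apply/subsetP=> y; rewrite mem_conjg => ky.
  have aA : y ^ h^-1 \in tA t := subsetP (cfker_sub _) _ ky.
  have hN : h \in 'N(tA t) by rewrite (subsetP nAH').
  have -> : y = (y ^ h^-1) ^ h by rewrite conjgKV.
  rewrite memK; last by rewrite memJ_norm.
  by rewrite (key _ _ aA hH) -memK.
have cAH : [~: tA t, tH t] \subset cfker (tth t).
  rewrite gen_subG; apply/subsetP => _ /imset2P[a h aA hH ->].
  have hN : h \in 'N(tA t) by rewrite (subsetP nAH').
  have ahA : a ^ h \in tA t by rewrite memJ_norm.
  have mA : a^-1 * a ^ h \in tA t by rewrite groupM ?groupV.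
  rewrite commgEl (memK _ mA) (lin_charM lin (groupVr aA) ahA).
  by rewrite (lin_charV lin aA) (key _ _ aA hH) mulVf ?(lin_char_neq0 lin aA).
have cA := quotient_cents2r cAH.
have abA : abelian (tA t / cfker (tth t)).
  exact: subset_trans cA (centS (quotientS _ sAH)).
have cAX : tA t / cfker (tth t) \subset 'C(X / cfker (tth t)).
  exact: subset_trans cA (centS (quotientS _ (normal_sub nXH))).
have nXA : tA t \subset 'N(X) := subset_trans sAH (normal_norm nXH).
have nKX : X \subset 'N(cfker (tth t)) := subset_trans (normal_sub nXH) nKH.
have := maxX (X <*> tA t)%G (normalY nXH nAH) (subset_trans kX (joing_subl _ _)).
rewrite /= norm_joinEr // quotientMl // abelianM abX abA cAX => /(_ isT) le.
have eqX : X :=: X * tA t by apply/eqP; rewrite eqEcard mulG_subl le.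
by rewrite eqX mulG_subr.
Qed.

Lemma epath_cat (T : Type) (e : T -> T -> Prop) x p q :
  epath e x (p ++ q) <-> epath e x p /\ epath e (last x p) q.
Proof.
elim: p x => [|y p IH] x /=; first by split=> [//|[]].
split=> [[exy /IH [h1 h2]] | [[exy h1] h2]]; first by [].
by split=> //; apply/IH.
Qed.

Lemma epath_mono (T : Type) (e e' : T -> T -> Prop) x p :
  (forall u v, e u v -> e' u v) -> epath e x p -> epath e' x p.
Proof. by move=> ee; elim: p x => [|y p IH] x //= [/ee ? /IH]. Qed.

Lemma cut_path (T : eqType) (e : T -> T -> Prop) x s :
  epath e x s -> uniq s -> x \in s ->
  exists s2, [/\ epath e x s2, last x s2 = last x s & uniq (x :: s2)].
Proof.
move=> ps us xs; case/splitPr: xs ps us => s1 s2 ps us.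
move: ps => /epath_cat [_ /= [_ ps2]].
exists s2; split=> //; first by rewrite last_cat.
by move: us; rewrite cat_uniq => /and3P[_ _].
Qed.

Lemma shorten_ex (T : eqType) (e : T -> T -> Prop) x p :
  epath e x p ->
  exists q, [/\ epath e x q, last x q = last x p & uniq (x :: q)].
Proof.
elim: p x => [|y p IH] x /=; first by exists [::].
case=> exy /IH [q [pq lq uq]].
have ps : epath e x (y :: q) by [].
have [xin|xnin] := boolP (x \in y :: q).
  have [s2 [ps2 l2 u2]] := cut_path ps uq xin.
  by exists s2; split=> //; rewrite l2 /= lq.
by exists (y :: q); split=> //=; rewrite ?lq // -/(uniq (y :: q)) xnin.
Qed.

Lemma uniq_walk (T : eqType) (e : T -> T -> Prop)
  (KEY : forall x y z p q, e x y -> e x z -> epath e y p -> epath e z q ->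
           last y p = last z q -> y = z) :
  forall x p q, epath e x p -> epath e x q -> last x p = last x q ->
    uniq (x :: p) -> uniq (x :: q) -> p = q.
Proof.
move=> x p; elim: p x => [|y p IH] x [|z q] //=.
- move=> _ [_ _] lq _ /andP[nx _]; case/negP: nx.
  by rewrite lq mem_last.
- move=> [_ _] _ lp /andP[nx _] _; case/negP: nx.
  by rewrite -lp mem_last.
move=> [exy py] [exz pz] l /andP[_ uy] /andP[_ uz].
have yz := KEY _ _ _ _ _ exy exz py pz l; subst z.
by rewrite (IH y q).
Qed.

Lemma step_inv (gT : finGroupType) (G N : {group gT})
  (cA : triple gT -> {group gT}) (reps : forall t, 'CF(cA t) -> Prop)
  (hA : forall t, lin_triple G N t -> calA_spec t (cA t))
  (hR : forall t, lin_triple G N t -> tH t != tA t -> reps_spec G N t (reps t))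
  y w : cl_edge G N cA reps y w ->
  tA y \subset tA w /\ ('Res[tA y] (tth w))%R = tth y.
Proof.
case=> ly lw neq [phi rphi ew]; subst w.
have sub := A_sub_calA ly (hA y ly).
have [/(_ phi rphi) [lphi dot _] _ _] := hR y ly neq.
split=> //; apply: lin_eq_dot dot; first exact: cfRes_lin_char.
by case: ly.
Qed.

Lemma walk_inv (gT : finGroupType) (G N : {group gT})
  (cA : triple gT -> {group gT}) (reps : forall t, 'CF(cA t) -> Prop)
  (hA : forall t, lin_triple G N t -> calA_spec t (cA t))
  (hR : forall t, lin_triple G N t -> tH t != tA t -> reps_spec G N t (reps t))
  y p : epath (cl_edge G N cA reps) y p ->
  tA y \subset tA (last y p) /\ ('Res[tA y] (tth (last y p)))%R = tth y.
Proof.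
elim: p y => [|w p IH] y /=; first by rewrite cfRes_id.
case=> /(step_inv hA hR) [s1 r1] /IH [s2 r2].
split; first exact: subset_trans s1 s2.
by rewrite -(cfResRes _ s1 s2) r2.
Qed.

Theorem lemma1 (gT : finGroupType) (G N : {group gT})
  (cA : triple gT -> {group gT}) (reps : forall t, 'CF(cA t) -> Prop) :
  in_classC G -> N <| G ->
  (forall t, lin_triple G N t -> calA_spec t (cA t)) ->
  (forall t, lin_triple G N t -> tH t != tA t -> reps_spec G N t (reps t)) ->
  forall v, GN_vertex G N cA reps v ->
  exists! p : seq (triple gT),
    dpath (GN_edge G N cA reps) (root_triple G N) v p.
Proof.
move=> _ _ hA hR v Hv.
have [p [pp lp]] : exists p, epath (GN_edge G N cA reps) (root_triple G N) p
    /\ last (root_triple G N) p = v.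
  elim: Hv => [|u w Hr [p [pp lp]] Huw]; first by exists [::].
  exists (rcons p w); rewrite last_rcons -cats1; split=> //.
  apply/epath_cat; split=> //=; split=> //; rewrite lp; split=> //.
  exact: reach_step Huw.
have [q [pq lq uq]] := shorten_ex pp.
exists q; split; first by split=> //; rewrite lq.
move=> q' [pq' lq' uq'].
have KEY : forall x y z p q, GN_edge G N cA reps x y -> GN_edge G N cA reps x z ->
    epath (GN_edge G N cA reps) y p -> epath (GN_edge G N cA reps) z q ->
    last y p = last z q -> y = z.
  move=> x y z p1 q1 [_ _ exy] [_ _ exz] py pz l.
  have py' := epath_mono (fun u v (h : GN_edge G N cA reps u v) =>
                 let: And3 _ _ c := h in c) py.
  have pz' := epath_mono (fun u v (h : GN_edge G N cA reps u v) =>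
                 let: And3 _ _ c := h in c) pz.
  have [_ ry] := walk_inv hA hR py'.
  have [_ rz] := walk_inv hA hR pz'.
  case: exy => _ _ _ [phi _ ey]; case: exz => _ _ _ [psi _ ez].
  subst y z. rewrite /= l in ry.
  have -> : phi = psi by rewrite -[phi]ry; exact: rz.
  by [].
apply: (uniq_walk KEY pq pq') => //.
by rewrite lq lq'.
Qed.
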